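(* Let $G$ be a connected bipartite graph with an even number $q$ of edges that contains exactly one pendant vertex (vertex of degree $1$). Then $\chi_{la}(G)\ge 3$.
   Context: For a connected graph $G=(V,E)$ with $q=|E|$, a local antimagic labeling is a bijection $f:E\to\{1,\dots,q\}$ such that for every pair of adjacent vertices $x,y$ we have $f^+(x)\ne f^+(y)$, where $f^+(x)=\sum f(e)$ over all edges $e$ incident to $x$. The color number $c(f)$ is the number of distinct values of $f^+$, and the local antimagic chromatic number $\chi_{la}(G)$ is the minimum of $c(f)$ over all local antimagic labelings $f$ of $G$. *)

(* Defs.v *)
From mathcomp Require Import all_boot all_order.
Set Implicit Arguments. Unset Strict Implicit. Unset Printing Implicit Defensive.

Section Graph.
Variables (T : finType) (adj : rel T).

Definition simple_graph := symmetric adj /\ irreflexive adj.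

Definition edges : {set {set T}} := [set [set x; y] | x in T, y in T & adj x y].

Definition connected_graph := forall x y : T, connect adj x y.

Definition bipartite := exists A : {set T},
  forall x y, adj x y -> (x \in A) != (y \in A).

Definition degree (x : T) : nat := #|[set y | adj x y]|.

Definition n_pendant : nat := #|[set x | degree x == 1]|.

Definition edge_bijection (f : {set T} -> nat) :=
  [/\ {in edges &, injective f},
      forall e, e \in edges -> 1 <= f e <= #|edges| &
      forall k, 1 <= k <= #|edges| -> exists2 e, e \in edges & f e = k].

Definition fplus (f : {set T} -> nat) (x : T) : nat :=
  \sum_(e in edges | x \in e) f e.

Definition local_antimagic (f : {set T} -> nat) :=
  edge_bijection f /\ forall x y, adj x y -> fplus f x != fplus f y.

Definition color_number (f : {set T} -> nat) : nat :=
  size (undup [seq fplus f x | x <- enum T]).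

End Graph.

(* Main.v *)
Require Import Defs.
From mathcomp Require Import all_boot all_order.
From mathcomp Require Import zify.
Set Warnings "-notation-overridden".
Set Implicit Arguments. Unset Strict Implicit.

Section Aux.
Variables (T : finType) (adj : rel T).
Hypothesis Hs : simple_graph adj.

Lemma mem_edges x y : adj x y -> [set x; y] \in edges adj.
Proof. by move=> h; apply/imset2P; exists x y => //; rewrite inE. Qed.

Lemma edgesP e : e \in edges adj -> exists x y, adj x y /\ e = [set x; y].
Proof. by case/imset2P => x y _; rewrite inE => h ->; exists x, y. Qed.

Definition dd x := \sum_(e in edges adj | x \in e) 1.

Lemma dd_degree x : dd x = degree adj x.
Proof.
case: Hs => sym irr.
rewrite /dd sum1dep_card /degree.
have -> : [set e | (e \in edges adj) && (x \in e)] =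
  [set [set x; y] | y in [set y | adj x y]].
  apply/setP => e; rewrite inE; apply/andP/imsetP.
  - case=> /edgesP [x0 [y0 [h ->]]]; rewrite !inE => /orP [] /eqP ->.
    + by exists y0; rewrite ?inE.
    + exists x0; first by rewrite inE sym.
      by rewrite setUC.
  - case=> y; rewrite inE => h ->; split; first exact: mem_edges.
    by rewrite !inE eqxx.
apply: card_in_imset => y1 y2; rewrite !inE => h1 h2 e.
have : y1 \in [set x; y2] by rewrite -e !inE eqxx orbT.
rewrite !inE => /orP [] /eqP // E; subst.
by rewrite irr in h1.
Qed.

Lemma key (A : {set T}) (g : {set T} -> nat) :
  (forall x y, adj x y -> (x \in A) != (y \in A)) ->
  \sum_(x in A) \sum_(e in edges adj | x \in e) g e = \sum_(e in edges adj) g e.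
Proof.
move=> hA.
rewrite (eq_bigr (fun x => \sum_(e in edges adj) (if x \in e then g e else 0))); last first.
  by move=> x _; rewrite big_mkcondr.
rewrite exchange_big /=; apply: eq_bigr => e /edgesP [x [y [h ->]]].
rewrite -big_mkcondr /=.
have := hA x y h.
case xA: (x \in A); case yA: (y \in A) => // _.
- rewrite (big_pred1 x) // => z; rewrite !inE /=.
  apply/andP/eqP => [[zA /orP [] /eqP]|->] //; last by rewrite eqxx xA.
  by move=> E; subst; rewrite yA in zA.
- rewrite (big_pred1 y) // => z; rewrite !inE /=.
  apply/andP/eqP => [[zA /orP [] /eqP]|->] //; last by rewrite eqxx orbT yA.
  by move=> E; subst; rewrite xA in zA.
Qed.

Lemma tri q : 2 * \sum_(1 <= i < q.+1) i = q * q.+1.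
Proof.
elim: q => [|q IH]; first by rewrite big_geq.
rewrite big_nat_recr //= mulnDr IH; lia.
Qed.

End Aux.

Theorem mainTheorem2 (T : finType) (adj : rel T) :
  simple_graph adj -> connected_graph adj -> bipartite adj ->
  ~~ odd #|edges adj| -> n_pendant adj = 1 ->
  forall f : {set T} -> nat, local_antimagic adj f -> 3 <= color_number adj f.
Proof.
move=> Hs _ _ Hq Hp f [[finj frng fsurj] Hla].
set q := #|edges adj|.
have /cards1P [u Hu] : #|[set x | degree adj x == 1]| == 1 by move: Hp; rewrite /n_pendant => ->.
have pend x : (degree adj x == 1) = (x == u).
  by rewrite -in_set1 -Hu inE.
have du : dd adj u = 1 by rewrite (dd_degree Hs); apply/eqP; rewrite pend.
have dx x : x != u -> dd adj x != 1 by rewrite (dd_degree Hs) pend.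
have lo x : dd adj x <= fplus adj f x.
  rewrite /dd /fplus; apply: leq_sum => e /andP [he _].
  by case/andP: (frng e he).
have hi x : fplus adj f x <= q * dd adj x.
  rewrite /dd /fplus big_distrr /= muln1; apply: leq_sum => e /andP [he _].
  by case/andP: (frng e he).
set a := fplus adj f u.
have a1 : 1 <= a by rewrite -du lo.
have aq : a <= q by rewrite -[q]muln1 -du hi.
rewrite leqNgt; apply/negP => Hc.
set s := [seq fplus adj f x | x <- enum T].
have two x y : fplus adj f x != a -> fplus adj f y != a -> fplus adj f x = fplus adj f y.
  move=> hx hy; apply/eqP/negPn/negP => hxy.
  have : size [:: a; fplus adj f x; fplus adj f y] <= size (undup s).
    apply: uniq_leq_size.
      by rewrite /= !inE negb_or eq_sym hx eq_sym hy hxy.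
    move=> z; rewrite !inE mem_undup => /or3P [] /eqP ->;
      by apply/mapP; eexists; last reflexivity; rewrite mem_enum.
  move: Hc; rewrite /color_number -/s /=. lia.
set A := [set x | fplus adj f x == a].
have hA x y : adj x y -> (x \in A) != (y \in A).
  move=> h; have := Hla x y h; rewrite !inE.
  case: (fplus adj f x =P a) => ex; case: (fplus adj f y =P a) => ey //.
  - by rewrite ex ey eqxx.
  - by rewrite (two x y) ?eqxx //; apply/eqP.
have uA : u \in A by rewrite inE.
set S := \sum_(e in edges adj) f e.
have E1 : #|A| * a = S.
  rewrite /S -(key f hA) -sum_nat_const; apply: eq_bigr => x.
  by rewrite inE => /eqP.
have E2 : \sum_(x in A) dd adj x = q.
  by rewrite /dd (key (fun _ => 1) hA) sum1_card.
have E3 : 1 + 2 * #|A :\ u| <= q.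
  rewrite -E2 (bigD1 u) //= du leq_add2l mulnC -sum_nat_const.
  rewrite (eq_bigl (fun x => (x \in A) && (x != u))); last first.
    by move=> x; rewrite in_setD1 andbC.
  apply: leq_sum => x /andP [xA nx].
  have h := hi x; move: xA; rewrite inE => /eqP ea; rewrite ea in h.
  have := dx x nx; move: h; case: (dd adj x) => [|[|n]] //.
  by rewrite muln0; lia.
have cA : #|A| = #|A :\ u|.+1 by rewrite (cardsD1 u A) uA.
have E4 : 2 * S = q * q.+1.
  rewrite -tri; congr (2 * _).
  rewrite /S -big_enum /= -(big_map f predT id).
  apply: perm_big; rewrite /index_iota subSS subn0.
  apply: uniq_perm.
  - rewrite map_inj_in_uniq ?enum_uniq // => e1 e2; rewrite !mem_enum; exact: finj.
  - exact: iota_uniq.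
  move=> k; rewrite mem_iota add1n ltnS; apply/mapP/idP.
  - by case=> e; rewrite mem_enum => he ->; apply: frng.
  - by case/fsurj => e he <-; exists e; rewrite ?mem_enum.
move: Hq; rewrite -/q.
have : 2 * #|A| * a <= 2 * #|A| * q by rewrite leq_mul2l aq orbT.
rewrite -mulnA E1 E4 cA.
nia.
Qed.
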